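(* Let $\langle D,\Gamma,\Delta\rangle$ be a planning problem with $(D,\Gamma)$ consistent and deterministic (i.e. $|\Phi(a,s)|\le 1$ for every action $a$ and state $s$) and $\Delta=p_1\wedge\dots\wedge p_k$ a conjunction of fluent literals, and let $n\ge0$. Then: (1) for each plan $a_0,\dots,a_{n-1}$ achieving $\Delta$ from $\Gamma$ there exists an answer set $M$ of $\Pi_n$ with $occ(a_i,i)\in M$ for all $i\in\{0,\dots,n-1\}$; (2) for each answer set $M$ of $\Pi_n$ there exists an integer $0\le k\le n$ such that, with $a_i$ the (unique) actions with $occ(a_i,i)\in M$ for $0\le i<k$, the sequence $a_0,\dots,a_{k-1}$ is a plan achieving $\Delta$ from $\Gamma$, and if $k<n$ then no action is executable in the state reached by executing $a_0,\dots,a_{k-1}$ in $s_0^\Gamma$.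
   Context: Action language $\mathcal{B}$: fix finite sets $\mathbf{F}$ of fluents and $\mathbf{A}$ of actions. A fluent literal is $f$ or $\neg f$ ($f\in\mathbf{F}$); the complement $\bar l$ of $f$ is $\neg f$ and of $\neg f$ is $f$. A set of fluent literals is consistent if it contains no pair $f,\neg f$; an interpretation is a maximal consistent set. For a set $u$ of literals, $u\models p_1\wedge\dots\wedge p_k$ means $\{p_1,\dots,p_k\}\subseteq u$. A domain description $D$ is a finite set of static causal laws $\mathbf{caused}(\{p_1,\dots,p_k\},f)$ (their set is $D_C$), dynamic causal laws $\mathbf{causes}(a,f,\{p_1,\dots,p_k\})$ and executability conditions $\mathbf{executable}(a,\{p_1,\dots,p_k\})$, with $a\in\mathbf{A}$ and $f,p_i$ fluent literals; $\Gamma$ is a set of propositions $\mathbf{initially}(f)$. A consistent set $u$ is closed under $D_C$ if for every $\mathbf{caused}(P,f)\in D_C$ with $P\subseteq u$, $f\in u$; $Cl_{D_C}(u)$ is the least consistent superset of $u$ closed under $D_C$ (undefined if none). A state is an interpretation closed under $D_C$. Action $a$ is executable in state $s$ if some $\mathbf{executable}(a,P)\in D$ has $P\subseteq s$. $E(a,s)=\{f\mid \mathbf{causes}(a,f,P)\in D,\ P\subseteq s\}$. $\Phi(a,s)=\{s'\mid s'\text{ a state},\ s'=Cl_{D_C}(E(a,s)\cup(s\cap s'))\}$ if $a$ is executable in $s$, and $\Phi(a,s)=\emptyset$ otherwise. A trajectory is a sequence $s_0a_0s_1\dots a_{m-1}s_m$ of states $s_i$ and actions $a_i$ with $s_{i+1}\in\Phi(a_i,s_i)$.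 $D$ is consistent if $\Phi(a,s)\ne\emptyset$ whenever $a$ is executable in state $s$; $(D,\Gamma)$ is consistent if $D$ is consistent and $s_0^\Gamma:=\{f\mid\mathbf{initially}(f)\in\Gamma\}$ is a state of $D$. A sequence of actions $a_0,\dots,a_{m-1}$ is a plan achieving $\Delta$ from $\Gamma$ (in the deterministic case) if there is a trajectory $s_0a_0s_1\dots a_{m-1}s_m$ with $s_0=s_0^\Gamma$ and $s_m\models\Delta$. Answer sets: a ground normal program consists of rules $h\leftarrow b_1,\dots,b_m,\mathit{not}\,c_1,\dots,\mathit{not}\,c_r$ and constraints $\bot\leftarrow b_1,\dots,b_m,\mathit{not}\,c_1,\dots,\mathit{not}\,c_r$. For a set $S$ of atoms, the reduct $\Pi^S$ deletes every rule/constraint containing $\mathit{not}\,c$ with $c\in S$ and deletes all $\mathit{not}$-literals from the rest; $S$ is an answer set of $\Pi$ if $S$ is the least set of atoms closed under the non-constraint rules of $\Pi^S$ and no constraint of $\Pi^S$ has its whole body contained in $S$. The program $\pi$ (ground; $t$ ranges over $\{0,\dots,n\}$ unless stated): (1) $holds(l,0)\leftarrow$ for each $\mathbf{initially}(l)\in\Gamma$; (2) $possible(a,t)\leftarrow holds(p_1,t),\dots,holds(p_k,t)$ for each $\mathbf{executable}(a,\{p_1,\dots,p_k\})\in D$; (3) for $t\in\{0,\dots,n-1\}$, $holds(f,t+1)\leftarrow occ(a,t),possible(a,t),holds(p_1,t),\dots,holds(p_k,t)$ for each $\mathbf{causes}(a,f,\{p_1,\dots,p_k\})\in D$; (4) $holds(f,t)\leftarrow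 holds(p_1,t),\dots,holds(p_k,t)$ for each $\mathbf{caused}(\{p_1,\dots,p_k\},f)\in D$; (5) $occ(a,t)\leftarrow possible(a,t),\mathit{not}\,nocc(a,t)$ for each action $a$; (6) $nocc(a,t)\leftarrow occ(b,t)$ for each pair of distinct actions $a\ne b$; (7) for $t\in\{0,\dots,n-1\}$, $holds(l,t+1)\leftarrow holds(l,t),\mathit{not}\,holds(\bar l,t+1)$ for each fluent literal $l$; (8) $\bot\leftarrow holds(f,t),holds(\neg f,t)$ for each fluent $f$. $\Pi_n$ is $\pi$ together with the rule $goal\leftarrow holds(p_1,n),\dots,holds(p_k,n)$ (where $\Delta=p_1\wedge\dots\wedge p_k$) and the constraint $\bot\leftarrow\mathit{not}\,goal$. For a set $M$ of atoms, $s_i(M)=\{l\mid l\text{ a fluent literal},\ holds(l,i)\in M\}$. *)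

(* Defs.v *)
From Stdlib Require List.
From mathcomp Require Import all_boot.

Set Implicit Arguments.
Unset Strict Implicit.
Unset Printing Implicit Defensive.

(* A fluent literal over fluents F: (f, true) is f, (f, false) is ~f. *)
Notation lit F := (F * bool)%type.

Definition compl {F : Type} (l : lit F) : lit F := (l.1, ~~ l.2).

(* Domain description: static causal laws caused(P, f), dynamic causal laws
   causes(a, f, P), executability conditions executable(a, P). *)
Record domain (F A : finType) := Domain {
  static_laws : seq (seq (lit F) * lit F);
  dynamic_laws : seq (A * lit F * seq (lit F));
  exec_conds : seq (A * seq (lit F)) }.

Section ActionLanguage.
Variables (F A : finType) (D : domain F A).

Definition consistent (u : {set lit F}) : Prop :=
  forall f : F, ~ ((f, true) \in u /\ (f, false) \in u).

Definition interpretation (u : {set lit F}) : Prop :=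
  consistent u /\ forall v : {set lit F}, consistent v -> u \subset v -> v = u.

Definition closed_DC (u : {set lit F}) : Prop :=
  forall (P : seq (lit F)) (f : lit F),
    (P, f) \in static_laws D -> {subset P <= u} -> f \in u.

(* is_Cl u v  <->  Cl_{D_C}(u) is defined and equals v *)
Definition is_Cl (u v : {set lit F}) : Prop :=
  [/\ consistent v, u \subset v, closed_DC v &
      forall w : {set lit F}, consistent w -> u \subset w -> closed_DC w -> v \subset w].

Definition state (s : {set lit F}) : Prop := interpretation s /\ closed_DC s.

Definition executable (a : A) (s : {set lit F}) : Prop :=
  exists P : seq (lit F), (a, P) \in exec_conds D /\ {subset P <= s}.

Definition E (a : A) (s : {set lit F}) : {set lit F} :=
  [set f | has (fun d : A * lit F * seq (lit F) =>
                  [&& d.1.1 == a, d.1.2 == f & all (fun p => p \in s) d.2])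
               (dynamic_laws D)].

Definition Phi (a : A) (s s' : {set lit F}) : Prop :=
  executable a s /\ state s' /\ is_Cl (E a s :|: (s :&: s')) s'.

Definition D_consistent : Prop :=
  forall (a : A) (s : {set lit F}), state s -> executable a s -> exists s', Phi a s s'.

Definition deterministic : Prop :=
  forall (a : A) (s s1 s2 : {set lit F}), state s -> Phi a s s1 -> Phi a s s2 -> s1 = s2.

(* Gamma is given as the set s_0^Gamma = {f | initially(f) in Gamma} *)
Definition problem_consistent (Gamma : {set lit F}) : Prop :=
  D_consistent /\ state Gamma.

Definition models (s : {set lit F}) (Delta : seq (lit F)) : Prop :=
  {subset Delta <= s}.

Fixpoint reach (s : {set lit F}) (acts : seq A) (s' : {set lit F}) : Prop :=
  match acts with
  | [::] => s' = s
  | a :: r => exists s1, Phi a s s1 /\ reach s1 r s'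
  end.

Definition trajectory_from (s : {set lit F}) (acts : seq A) (s' : {set lit F}) : Prop :=
  state s /\ reach s acts s'.

Definition is_plan (Gamma : {set lit F}) (Delta : seq (lit F)) (acts : seq A) : Prop :=
  exists s', trajectory_from Gamma acts s' /\ models s' Delta.

End ActionLanguage.

Inductive atom (F A : Type) : Type :=
| Holds of lit F & nat
| Possible of A & nat
| Occ of A & nat
| Nocc of A & nat
| Goal.
Arguments Goal {F A}.

(* rule (head, positive body, negative body); head None = constraint *)
Definition rule (X : Type) := (option X * seq X * seq X)%type.
Definition program (X : Type) := seq (rule X).

Section AnswerSets.
Variable X : Type.

(* r belongs to the reduct Pi^S (with its not-literals removed) *)
Definition in_reduct (P : program X) (S : X -> Prop) (r : rule X) : Prop :=
  List.In r P /\ forall c, List.In c r.2 -> ~ S c.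

Definition closed_reduct (P : program X) (S T : X -> Prop) : Prop :=
  forall (h : X) (pos neg : seq X),
    in_reduct P S (Some h, pos, neg) -> (forall b, List.In b pos -> T b) -> T h.

Definition answer_set (P : program X) (S : X -> Prop) : Prop :=
  [/\ closed_reduct P S S,
      (forall T, closed_reduct P S T -> forall x, S x -> T x) &
      (forall pos neg : seq X, in_reduct P S (None, pos, neg) ->
         ~ (forall b, List.In b pos -> S b))].

End AnswerSets.

Section Program.
Variables (F A : finType) (D : domain F A).
Implicit Types (Gamma : {set lit F}) (Delta : seq (lit F)) (n : nat).

Definition hs (t : nat) (P : seq (lit F)) : seq (atom F A) :=
  [seq Holds A p t | p <- P].

Definition pi_prog Gamma n : program (atom F A) :=
  (* (1) *)
  [seq (Some (Holds A l 0), [::], [::]) | l <- enum Gamma] ++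
  (* (2) *)
  [seq (Some (Possible F e.1 t), hs t e.2, [::]) | t <- iota 0 n.+1, e <- exec_conds D] ++
  (* (3) *)
  [seq (Some (Holds A d.1.2 t.+1), Occ F d.1.1 t :: Possible F d.1.1 t :: hs t d.2, [::])
     | t <- iota 0 n, d <- dynamic_laws D] ++
  (* (4) *)
  [seq (Some (Holds A c.2 t), hs t c.1, [::]) | t <- iota 0 n.+1, c <- static_laws D] ++
  (* (5) *)
  [seq (Some (Occ F a t), [:: Possible F a t], [:: Nocc F a t]) | t <- iota 0 n.+1, a <- enum A] ++
  (* (6) *)
  [seq (Some (Nocc F ab.1 t), [:: Occ F ab.2 t], [::])
     | t <- iota 0 n.+1, ab <- [seq ab <- enum {: A * A} | ab.1 != ab.2]] ++
  (* (7) *)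
  [seq (Some (Holds A l t.+1), [:: Holds A l t], [:: Holds A (compl l) t.+1])
     | t <- iota 0 n, l <- enum {: lit F}] ++
  (* (8) *)
  [seq (None, [:: Holds A (f, true) t; Holds A (f, false) t], [::])
     | t <- iota 0 n.+1, f <- enum F].

Definition Pi_n Gamma Delta n : program (atom F A) :=
  pi_prog Gamma n ++
  [:: (Some Goal, hs n Delta, [::]); (None, [::], [:: Goal])].

End Program.

(* Main.v *)
Require Import Defs.
From mathcomp Require Import all_boot.
From Stdlib Require Import Classical ClassicalEpsilon.
Set Implicit Arguments.
Unset Strict Implicit.
Unset Printing Implicit Defensive.

Lemma InE (T : eqType) (x : T) s : List.In x s <-> x \in s.
Proof.
elim: s => [|y s IH] //=; rewrite in_cons; split.
- by case=> [->|/IH ->]; rewrite ?eqxx ?orbT.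
- by case/orP=> [/eqP ->|/IH]; auto.
Qed.

Lemma In_comp2 (T U V : Type) (f : T -> U -> V) l1 l2 x :
  List.In x (flatten [seq [seq f t e | e <- l2] | t <- l1]) <->
  exists t e, List.In t l1 /\ List.In e l2 /\ x = f t e.
Proof.
elim: l1 => [|t l1 IH] /=; first by split=> //; case=> ? [? []].
rewrite List.in_app_iff IH List.in_map_iff; split.
- case=> [[e [<- He]]|[t' [e [H1 [H2 ->]]]]]; first by exists t, e; auto.
  by exists t', e; auto.
- case=> [t' [e [[<-|H1] [H2 ->]]]]; first by left; exists e.
  by right; exists t', e.
Qed.

Lemma In_iota t n : List.In t (iota 0 n) <-> t < n.
Proof. by rewrite InE mem_iota. Qed.

Lemma In_hs (F A : finType) b t (P : seq (lit F)) :
  List.In b (hs A t P) <-> exists p, b = Holds A p t /\ p \in P.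
Proof.
rewrite List.in_map_iff; split.
- by case=> p [<- /InE]; exists p.
- by case=> p [-> /InE]; exists p.
Qed.

Section X.
Lemma in_Pi (F A : finType) (D : domain F A) Gamma Delta n r :
  List.In r (Pi_n D Gamma Delta n) <->
  (exists l, l \in Gamma /\ r = (Some (Holds A l 0), [::], [::])) \/
  (exists t e, t <= n /\ e \in exec_conds D /\ r = (Some (Possible F e.1 t), hs A t e.2, [::])) \/
  (exists t d, t < n /\ d \in dynamic_laws D /\
          r = (Some (Holds A d.1.2 t.+1), Occ F d.1.1 t :: Possible F d.1.1 t :: hs A t d.2, [::])) \/
  (exists t c, t <= n /\ c \in static_laws D /\ r = (Some (Holds A c.2 t), hs A t c.1, [::])) \/
  (exists t a, t <= n /\ r = (Some (Occ F a t), [:: Possible F a t], [:: Nocc F a t])) \/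
  (exists t a b, t <= n /\ a != b /\ r = (Some (Nocc F a t), [:: Occ F b t], [::])) \/
  (exists t l, t < n /\ r = (Some (Holds A l t.+1), [:: Holds A l t], [:: Holds A (compl l) t.+1])) \/
  (exists t f, t <= n /\ r = (None, [:: Holds A (f, true) t; Holds A (f, false) t], [::])) \/
  r = (Some Goal, hs A n Delta, [::]) \/ r = (None, [::], [:: Goal]).
Proof.
rewrite /Pi_n /pi_prog.
have HI1 := In_iota ^~ n.+1; have HI0 := In_iota ^~ n.
move: (iota 0 n.+1) (iota 0 n) HI1 HI0 => I1 I0 HI1 HI0.
rewrite !List.in_app_iff !In_comp2 List.in_map_iff /=.
split.
- case=> [|[<-|[<-|[]]]]; last 2 first.
    by do 8 right; left.
    by do 9 right.
  case=> [[l [<- /InE]]|]; first by rewrite mem_enum => Hl; left; exists l.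
  case=> [[t [e [/HI1 Ht [/InE He ->]]]]|]; first by right; left; exists t, e.
  case=> [[t [e [/HI0 Ht [/InE He ->]]]]|]; first by do 2 right; left; exists t, e.
  case=> [[t [e [/HI1 Ht [/InE He ->]]]]|]; first by do 3 right; left; exists t, e.
  case=> [[t [e [/HI1 Ht [/InE He ->]]]]|]; first by do 4 right; left; exists t, e.
  case=> [[t [[a b] [/HI1 Ht [/InE He ->]]]]|].
    by do 5 right; left; exists t, a, b; rewrite mem_filter in He; case/andP: He.
  case=> [[t [e [/HI0 Ht [/InE He ->]]]]|]; first by do 6 right; left; exists t, e.
  by case=> [t [e [/HI1 Ht [/InE He ->]]]]; do 7 right; left; exists t, e.
- case.
    by case=> l [Hl ->]; left; left; exists l; split=> //; apply/InE; rewrite mem_enum.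
  case.
    by case=> t [e [Ht [He ->]]]; left; right; left; exists t, e; rewrite HI1; split=> //; split=> //; apply/InE.
  case.
    by case=> t [e [Ht [He ->]]]; left; do 2 right; left; exists t, e; rewrite HI0; split=> //; split=> //; apply/InE.
  case.
    by case=> t [e [Ht [He ->]]]; left; do 3 right; left; exists t, e; rewrite HI1; split=> //; split=> //; apply/InE.
  case.
    by case=> t [e [Ht ->]]; left; do 4 right; left; exists t, e; rewrite HI1; split=> //; split=> //; apply/InE; rewrite mem_enum.
  case.
    case=> t [a [b [Ht [Hab ->]]]]; left; do 5 right; left; exists t, (a, b); rewrite HI1; split=> //; split=> //.
    by apply/InE; rewrite mem_filter mem_enum Hab.
  case.
    by case=> t [e [Ht ->]]; left; do 6 right; left; exists t, e; rewrite HI0; split=> //; split=> //; apply/InE; rewrite mem_enum.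
  case.
    by case=> t [e [Ht ->]]; left; do 7 right; exists t, e; rewrite HI1; split=> //; split=> //; apply/InE; rewrite mem_enum.
  by case=> ->; right; auto.
Qed.
End X.

Lemma unfounded (X : Type) (P : program X) M (R : X -> Prop) :
  answer_set P M ->
  (forall h pos neg, in_reduct P M (Some h, pos, neg) ->
     (forall b, List.In b pos -> M b /\ ~ R b) -> ~ R h) ->
  forall x, M x -> ~ R x.
Proof.
case=> Hcl Hmin _ HR x Mx.
have [] // := Hmin (fun y => M y /\ ~ R y) _ x Mx.
move=> h pos neg Hr Hb; split; first by apply: Hcl Hr _ => b /Hb [].
exact: HR Hr Hb.
Qed.

Lemma supp (X : Type) (P : program X) M x :
  answer_set P M -> M x ->
  exists pos neg, in_reduct P M (Some x, pos, neg) /\ forall b, List.In b pos -> M b.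
Proof.
move=> HM Mx; apply: NNPP => H.
apply: (unfounded (R := fun y => y = x) HM _ Mx erefl).
move=> h pos neg Hr Hb Hh; subst h; apply: H; exists pos, neg; split=> // b; by case/Hb.
Qed.

Definition asb (P : Prop) : bool := if excluded_middle_informative P then true else false.
Lemma asbP P : asb P <-> P.
Proof. by rewrite /asb; case: excluded_middle_informative. Qed.

Definition complete (F : finType) (u : {set lit F}) := forall f, (f, true) \in u \/ (f, false) \in u.

Lemma interp_complete (F : finType) (u : {set lit F}) : interpretation u -> complete u.
Proof.
case=> Hc Hmax f; apply: NNPP => H.
have H1 : (f, true) \notin u by apply/negP => ?; apply: H; left.
have H2 : (f, false) \notin u by apply/negP => ?; apply: H; right.
have Hv : (f, true) |: u = u.
  apply: Hmax; last exact: subsetUr.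
  move=> g; rewrite !in_setU1 => -[/orP [/eqP [->]|Ht] /orP [/eqP //|Hf]].
  - by rewrite Hf in H2.
  - by apply: (Hc g).
have : (f, true) \in (f, true) |: u by rewrite setU11.
by rewrite Hv (negbTE H1).
Qed.

Lemma complete_interp (F : finType) (u : {set lit F}) :
  consistent u -> complete u -> interpretation u.
Proof.
move=> Hc Hu; split=> // v Hv Huv; apply/eqP; rewrite eqEsubset Huv andbT.
apply/subsetP => -[f b] Hfb.
case: (Hu f) => Hf.
- case: b Hfb => // Hfb; case: (Hv f); split=> //; exact: (subsetP Huv).
- case: b Hfb => // Hfb; case: (Hv f); split=> //; exact: (subsetP Huv).
Qed.

Section Rules.
Variables (F A : finType) (D : domain F A) (Gamma : {set lit F}) (Delta : seq (lit F)) (n : nat).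
Variables (M T : atom F A -> Prop).
Hypothesis HT : forall h pos neg, in_reduct (Pi_n D Gamma Delta n) M (Some h, pos, neg) ->
  (forall b, List.In b pos -> T b) -> T h.
Let P := Pi_n D Gamma Delta n.

Lemma hs_all t (Q : seq (lit F)) : (forall p, p \in Q -> T (Holds A p t)) ->
  forall b, List.In b (hs A t Q) -> T b.
Proof. by move=> H b /In_hs [p [-> Hp]]; apply: H. Qed.

Lemma cl1 l : l \in Gamma -> T (Holds A l 0).
Proof.
move=> Hl; apply: (@HT _ [::] [::]) => //; split=> //.
by apply/in_Pi; left; exists l.
Qed.

Lemma cl2 t e : t <= n -> e \in exec_conds D ->
  (forall p, p \in e.2 -> T (Holds A p t)) -> T (Possible F e.1 t).
Proof.
move=> Ht He Hb; apply: (@HT _ _ [::]); last exact: (hs_all Hb).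
by split=> //; apply/in_Pi; right; left; exists t, e.
Qed.

Lemma cl3 t d : t < n -> d \in dynamic_laws D -> T (Occ F d.1.1 t) -> T (Possible F d.1.1 t) ->
  (forall p, p \in d.2 -> T (Holds A p t)) -> T (Holds A d.1.2 t.+1).
Proof.
move=> Ht Hd H1 H2 Hb; apply: (@HT _ _ [::]).
  by split=> //; apply/in_Pi; do 2 right; left; exists t, d.
by move=> b [<-|[<-|]] //; exact: (hs_all Hb).
Qed.

Lemma cl4 t c : t <= n -> c \in static_laws D ->
  (forall p, p \in c.1 -> T (Holds A p t)) -> T (Holds A c.2 t).
Proof.
move=> Ht Hc Hb; apply: (@HT _ _ [::]); last exact: (hs_all Hb).
by split=> //; apply/in_Pi; do 3 right; left; exists t, c.
Qed.

Lemma cl5 t a : t <= n -> ~ M (Nocc F a t) -> T (Possible F a t) -> T (Occ F a t).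
Proof.
move=> Ht HN H1; apply: (@HT _ [:: Possible F a t] [:: Nocc F a t]); last by move=> b [<-|].
split; last by move=> c [<-|].
by apply/in_Pi; do 4 right; left; exists t, a.
Qed.

Lemma cl6 t a b : t <= n -> a != b -> T (Occ F b t) -> T (Nocc F a t).
Proof.
move=> Ht Hab H1; apply: (@HT _ [:: Occ F b t] [::]); last by move=> c [<-|].
by split=> //; apply/in_Pi; do 5 right; left; exists t, a, b.
Qed.

Lemma cl7 t l : t < n -> ~ M (Holds A (compl l) t.+1) -> T (Holds A l t) -> T (Holds A l t.+1).
Proof.
move=> Ht HN H1; apply: (@HT _ [:: Holds A l t] [:: Holds A (compl l) t.+1]); last by move=> b [<-|].
split; last by move=> c [<-|].
by apply/in_Pi; do 6 right; left; exists t, l.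
Qed.

Lemma cl9 : (forall p, p \in Delta -> T (Holds A p n)) -> T Goal.
Proof.
move=> Hb; apply: (@HT _ _ [::]); last exact: (hs_all Hb).
by split=> //; apply/in_Pi; do 8 right; left.
Qed.
End Rules.

Lemma reduct_cases (F A : finType) (D : domain F A) Gamma Delta n (M : atom F A -> Prop) h pos neg :
  in_reduct (Pi_n D Gamma Delta n) M (Some h, pos, neg) ->
  (exists l, l \in Gamma /\ h = Holds A l 0 /\ pos = [::]) \/
  (exists t e, t <= n /\ e \in exec_conds D /\ h = Possible F e.1 t /\ pos = hs A t e.2) \/
  (exists t d, t < n /\ d \in dynamic_laws D /\ h = Holds A d.1.2 t.+1 /\
      pos = Occ F d.1.1 t :: Possible F d.1.1 t :: hs A t d.2) \/
  (exists t c, t <= n /\ c \in static_laws D /\ h = Holds A c.2 t /\ pos = hs A t c.1) \/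
  (exists t a, t <= n /\ h = Occ F a t /\ pos = [:: Possible F a t] /\ ~ M (Nocc F a t)) \/
  (exists t a b, t <= n /\ a != b /\ h = Nocc F a t /\ pos = [:: Occ F b t]) \/
  (exists t l, t < n /\ h = Holds A l t.+1 /\ pos = [:: Holds A l t] /\ ~ M (Holds A (compl l) t.+1)) \/
  (h = Goal /\ pos = hs A n Delta).
Proof.
case=> /in_Pi Hin Hneg.
case: Hin => [[l [Hl [-> ->]]]|]; first by left; exists l.
case=> [[t [e [Ht [He [-> ->]]]]]|]; first by right; left; exists t, e.
case=> [[t [e [Ht [He [-> ->]]]]]|]; first by do 2 right; left; exists t, e.
case=> [[t [e [Ht [He [-> ->]]]]]|]; first by do 3 right; left; exists t, e.
case=> [[t [e [Ht [-> -> Hn]]]]|].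
  by do 4 right; left; exists t, e; do 3 split=> //; apply: Hneg => /=; rewrite Hn; left.
case=> [[t [a [b [Ht [Hab [-> ->]]]]]]|]; first by do 5 right; left; exists t, a, b.
case=> [[t [e [Ht [-> -> Hn]]]]|].
  by do 6 right; left; exists t, e; do 3 split=> //; apply: Hneg => /=; rewrite Hn; left.
case=> [[t [e [Ht //]]]|].
by case=> [[-> ->]|//]; do 7 right.
Qed.

Definition Sset (F A : finType) (M : atom F A -> Prop) t : {set lit F} :=
  [set l | asb (M (Holds A l t))].

Lemma inS (F A : finType) (M : atom F A -> Prop) l t : l \in Sset M t <-> M (Holds A l t).
Proof. by rewrite inE asbP. Qed.

Ltac rcases Hr h pos :=
  destruct (reduct_cases Hr) as
    [[r_l [r_Hl [Eh Ep]]]|[[r_t [r_e [r_Ht [r_He [Eh Ep]]]]]|[[r_t [r_d [r_Ht [r_Hd [Eh Ep]]]]]|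
     [[r_t [r_c [r_Ht [r_Hc [Eh Ep]]]]]|[[r_t [r_a [r_Ht [Eh [Ep r_Hn]]]]]|
     [[r_t [r_a [r_b [r_Ht [r_Hab [Eh Ep]]]]]]|[[r_t [r_l [r_Ht [Eh [Ep r_Hn]]]]]|[Eh Ep]]]]]]]];
  try subst h; try subst pos; try discriminate; try (injection Eh; intros; subst); try discriminate.

Section Part2.
Variables (F A : finType) (D : domain F A) (Gamma : {set lit F}) (Delta : seq (lit F)) (n : nat).
Variable M : atom F A -> Prop.
Hypothesis HM : answer_set (Pi_n D Gamma Delta n) M.
Local Notation S := (Sset M).

Lemma Mcl : closed_reduct (Pi_n D Gamma Delta n) M M.
Proof. by case: HM. Qed.

Lemma Scons t : t <= n -> consistent (S t).
Proof.
move=> Ht f [/inS H1 /inS H2]; case: HM => _ _ Hc.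
apply: (Hc [:: Holds A (f, true) t; Holds A (f, false) t] [::]).
  by split=> //; apply/in_Pi; do 7 right; left; exists t, f.
by move=> b [<-|[<-|[]]].
Qed.

Lemma Sclosed t : t <= n -> closed_DC D (S t).
Proof.
move=> Ht P f Hc HP; apply/inS.
by apply: (cl4 Mcl Ht Hc) => p Hp; apply/inS; exact: HP.
Qed.

Lemma Scomplete t : t < n -> complete (S t) -> complete (S t.+1).
Proof.
move=> Ht Hc f; case: (Hc f) => /inS H.
- case: (classic (M (Holds A (f, false) t.+1))) => H2; first by right; apply/inS.
  by left; apply/inS; apply: (cl7 Mcl (l := (f, true)) Ht H2).
- case: (classic (M (Holds A (f, true) t.+1))) => H2; first by left; apply/inS.
  by right; apply/inS; apply: (cl7 Mcl (l := (f, false)) Ht H2).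
Qed.

Lemma occ_inv a t : M (Occ F a t) -> t <= n /\ M (Possible F a t) /\ ~ M (Nocc F a t).
Proof.
case/(supp HM) => pos [neg [Hr Hb]]; rcases Hr h pos.
by split=> //; split=> //; apply: Hb; left.
Qed.

Lemma poss_inv a t : M (Possible F a t) -> t <= n /\ executable D a (S t).
Proof.
case/(supp HM) => pos [neg [Hr Hb]]; rcases Hr h pos.
split=> //; exists r_e.2; split; first by case: (r_e) r_He.
by move=> p Hp; apply/inS; apply: Hb; apply/In_hs; exists p.
Qed.

Lemma poss_intro a t : t <= n -> executable D a (S t) -> M (Possible F a t).
Proof.
move=> Ht [P [HP Hsub]].
by apply: (cl2 Mcl (e := (a, P)) Ht HP) => p /Hsub /inS.
Qed.

Lemma occ_uniq a b t : M (Occ F a t) -> M (Occ F b t) -> a = b.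
Proof.
move=> Ha Hb; case: (eqVneq a b) => // Hab; exfalso.
have [Ht [_ HN]] := occ_inv Ha; apply: HN; exact: (cl6 Mcl Ht Hab Hb).
Qed.

Lemma poss_occ a t : M (Possible F a t) -> exists b, M (Occ F b t).
Proof.
move=> Hp; apply: NNPP => H.
have [Ht _] := poss_inv Hp.
have HN : ~ M (Nocc F a t).
  case/(supp HM) => pos [neg [Hr Hb]]; rcases Hr h pos.
  by apply: H; exists r_b; apply: Hb; left.
by apply: H; exists a; apply: (cl5 Mcl Ht HN Hp).
Qed.

Lemma S_least t (w : {set lit F}) : t < n -> closed_DC D w -> S t :&: S t.+1 \subset w ->
  (forall d, d \in dynamic_laws D -> M (Occ F d.1.1 t) -> M (Possible F d.1.1 t) ->
     {subset d.2 <= S t} -> d.1.2 \in w) ->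
  S t.+1 \subset w.
Proof.
move=> Ht Hw Hsw Hd; apply/subsetP => l /inS Ml.
case Hl: (l \in w) => //; exfalso.
apply: (unfounded (R := fun y => exists l, y = Holds A l t.+1 /\ l \notin w) HM _ Ml);
  last by exists l; rewrite Hl.
move=> h pos neg Hr Hb [l' [Eh' Hl']]; subst h; rcases Hr h pos.
- move/negP: Hl'; apply; apply: Hd => //.
  + by case: (Hb _ (or_introl erefl)).
  + by case: (Hb _ (or_intror (or_introl erefl))).
  + move=> p Hp; apply/inS; case: (Hb (Holds A p r_t)) => //.
    by right; right; apply/In_hs; exists p.
- move/negP: Hl'; apply; apply: (Hw r_c.1 r_c.2); first by case: (r_c) r_Hc.
  move=> p Hp; case: (Hb (Holds A p t.+1)); first by apply/In_hs; exists p.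
  by move=> _ H2; case Hpw: (p \in w) => //; exfalso; apply: H2; exists p; rewrite Hpw.
- move/negP: Hl'; apply; apply: (subsetP Hsw); rewrite inE; apply/andP; split; apply/inS.
  + by case: (Hb _ (or_introl erefl)).
  + apply: (cl7 Mcl r_Ht r_Hn); by case: (Hb _ (or_introl erefl)).
Qed.

Lemma S_state_step t : t < n -> state D (S t) -> state D (S t.+1).
Proof.
move=> Ht [Hi _]; split; last exact: Sclosed.
apply: complete_interp; first exact: Scons.
apply: Scomplete => //; exact: interp_complete.
Qed.

Lemma S_Phi t a : t < n -> state D (S t) -> M (Occ F a t) -> Phi D a (S t) (S t.+1).
Proof.
move=> Ht Hs Ho; have [_ [Hp _]] := occ_inv Ho.
have [_ Hex] := poss_inv Hp.
have Hs' := S_state_step Ht Hs.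
have HE : E D a (S t) \subset S t.+1.
  apply/subsetP => f; rewrite inE => /hasP [d Hd /and3P [/eqP Ha /eqP Hf /allP Hall]].
  subst; apply/inS; apply: (cl3 Mcl Ht Hd Ho Hp) => p /Hall /inS //.
split=> //; split=> //; split.
- exact: Scons.
- by rewrite subUset HE subsetIr.
- exact: Sclosed.
- move=> w _ Hw Hcl; apply: S_least => //.
    by apply: subset_trans Hw; rewrite subsetUr.
  move=> d Hd Hod _ Hsub; have Ha := occ_uniq Hod Ho.
  apply: (subsetP Hw); rewrite inE; apply/orP; left; rewrite inE; apply/hasP; exists d => //.
  by rewrite Ha !eqxx /=; apply/allP.
Qed.

Lemma S_stay t : t < n -> state D (S t) -> (forall a, ~ M (Occ F a t)) -> S t.+1 = S t.
Proof.
move=> Ht Hs Hno; have Hs' := S_state_step Ht Hs.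
have Hsub : S t.+1 \subset S t.
  apply: S_least => //; first by case: Hs.
  - exact: subsetIl.
  - by move=> d _ /Hno.
apply/eqP; rewrite eqEsubset Hsub /=; apply/subsetP => -[f b] Hfb.
case: Hs => [[Hc _] _].
case: (interp_complete Hs'.1 f) => Hf.
- case: b Hfb => // Hfb; exfalso; apply: (Hc f); split=> //; exact: (subsetP Hsub).
- case: b Hfb => // Hfb; exfalso; apply: (Hc f); split=> //; exact: (subsetP Hsub).
Qed.

Lemma S0 : closed_DC D Gamma -> S 0 = Gamma.
Proof.
move=> HG; apply/eqP; rewrite eqEsubset; apply/andP; split; last first.
  by apply/subsetP => l Hl; apply/inS; apply: (cl1 Mcl Hl).
apply/subsetP => l /inS Ml.
case Hl: (l \in Gamma) => //; exfalso.
apply: (unfounded (R := fun y => exists l, y = Holds A l 0 /\ l \notin Gamma) HM _ Ml);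
  last by exists l; rewrite Hl.
move=> h pos neg Hr Hb [l' [Eh' Hl']]; subst h; rcases Hr h pos.
- by rewrite r_Hl in Hl'.
- move/negP: Hl'; apply; apply: (HG r_c.1 r_c.2); first by case: (r_c) r_Hc.
  move=> p Hp; case: (Hb (Holds A p 0)); first by apply/In_hs; exists p.
  by move=> _ H2; case Hpw: (p \in Gamma) => //; exfalso; apply: H2; exists p; rewrite Hpw.
Qed.

End Part2.

Lemma reach_cat (F A : finType) (D : domain F A) s l1 l2 s' :
  reach D s (l1 ++ l2) s' <-> exists m, reach D s l1 m /\ reach D m l2 s'.
Proof.
elim: l1 s => [|a l1 IH] s /=.
  by split; [exists s | case=> m [-> H]].
split.
- case=> s1 [HP /IH [m [H1 H2]]]; exists m; split=> //; exists s1; auto.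
- case=> m [[s1 [HP H1]] H2]; exists s1; split=> //; apply/IH; exists m; auto.
Qed.

Lemma reach_rcons (F A : finType) (D : domain F A) s l a s' :
  reach D s (rcons l a) s' <-> exists m, reach D s l m /\ Phi D a m s'.
Proof.
rewrite -cats1 reach_cat; split.
- by case=> m [H1 [s1 [HP ->]]]; exists m.
- by case=> m [H1 HP]; exists m; split=> //; exists s'.
Qed.

Lemma reach_state (F A : finType) (D : domain F A) l s s' :
  state D s -> reach D s l s' -> state D s'.
Proof.
elim: l s => [|a l IH] s /= Hs; first by move=> ->.
by case=> s1 [[_ [Hs1 _]] H]; apply: IH H.
Qed.

Lemma reach_det (F A : finType) (D : domain F A) l s s1 s2 :
  deterministic D -> state D s -> reach D s l s1 -> reach D s l s2 -> s1 = s2.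
Proof.
move=> Hdet; elim: l s => [|a l IH] s /= Hs; first by move=> -> ->.
case=> m1 [HP1 H1] [m2 [HP2 H2]].
have Em := Hdet _ _ _ _ Hs HP1 HP2; subst m2.
by apply: IH H1 H2; case: HP1 => _ [].
Qed.

Lemma part2 (F A : finType) (D : domain F A) (Gamma : {set F * bool})
    (Delta : seq (F * bool)) (n : nat) :
  problem_consistent D Gamma -> deterministic D ->
  (forall M : atom F A -> Prop, answer_set (Pi_n D Gamma Delta n) M ->
     exists k : nat, k <= n /\
       exists acts : seq A,
         [/\ size acts = k,
             (forall (i : nat) (a : A), onth acts i = Some a -> M (Occ F a i)),
             (forall (i : nat) (a b : A), onth acts i = Some a -> M (Occ F b i) -> b = a),
             is_plan D Gamma Delta acts &
             (k < n -> forall s : {set F * bool}, trajectory_from D Gamma acts s ->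
                forall a : A, ~ executable D a s)]).
Proof.
move=> [HDc HG] Hdet M HM.
have HS0 := S0 HM HG.2.
pose good j := exists acts, [/\ size acts = j,
   (forall i a, onth acts i = Some a -> M (Occ F a i)) & reach D Gamma acts (Sset M j)].
have Hgood_state : forall j, good j -> state D (Sset M j).
  by move=> j [acts [_ _ Hr]]; apply: reach_state HG Hr.
have HQ : forall j, j <= n -> good j \/ exists k, [/\ k < j, good k,
     (forall a, ~ executable D a (Sset M k)) & Sset M j = Sset M k].
  elim=> [_|j IH Hj].
    by left; exists [::]; split=> //= i a; rewrite onth0n.
  have Hjn : j < n by [].
  case: (IH (ltnW Hj)) => [Hg|[k [Hkj Hgk Hno Ejk]]].
  - have Hsj := Hgood_state _ Hg.
    case: Hg => acts [Hsz Hocc Hr].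
    case: (classic (exists b, M (Occ F b j))) => [[b Hb]|Hnb].
    + left; exists (rcons acts b); split.
      * by rewrite size_rcons Hsz.
      * move=> i a; rewrite -cats1 onth_cat; case: ifP => Hi; first exact: Hocc.
        move: Hi; rewrite Hsz => /negbT; rewrite -leqNgt => Hi.
        case E: (i - j) => [|m] /=; last by rewrite onth0n.
        case=> <-.
        by have -> : i = j by apply/eqP; rewrite eqn_leq Hi -subn_eq0 E.
      * apply/reach_rcons; exists (Sset M j); split=> //. exact: (S_Phi HM Hjn Hsj Hb).
    + right; exists j; split=> //.
      * by exists acts.
      * move=> a /(poss_intro HM (ltnW Hjn)) /(poss_occ HM) Hb; exact: Hnb.
      * apply: (S_stay HM Hjn Hsj) => a Ha; apply: Hnb; by exists a.
  - right; exists k; split=> //; first exact: ltnW.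
    have Hsk := Hgood_state _ Hgk.
    have Hsj : state D (Sset M j) by rewrite Ejk.
    rewrite -Ejk; apply: (S_stay HM Hjn Hsj).
    move=> a /(occ_inv HM) [_ [/(poss_inv HM) [_ Hex] _]].
    by apply: (Hno a); rewrite -Ejk.
have HGoal : M Goal.
  apply: NNPP => HN; case: HM => _ _ Hc.
  apply: (Hc [::] [:: Goal]) => //; split => //.
    by apply/in_Pi; do 9 right.
  by move=> c [<-|].
have HDelta : {subset Delta <= Sset M n}.
  case/(supp HM): HGoal => pos [neg [Hr Hb]]; rcases Hr h pos.
  by move=> p Hp; apply/inS; apply: Hb; apply/In_hs; exists p.
case: (HQ n (leqnn n)) => [[acts [Hsz Hocc Hr]]|[k [Hkn [acts [Hsz Hocc Hr]] Hno Enk]]].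
- exists n; split=> //; exists acts; split=> //.
  + by move=> i a b /Hocc Ha Hb; apply: (occ_uniq HM Hb Ha).
  + by exists (Sset M n); split=> //; split.
  + by rewrite ltnn.
- exists k; split; first exact: ltnW.
  exists acts; split=> //.
  + by move=> i a b /Hocc Ha Hb; apply: (occ_uniq HM Hb Ha).
  + by exists (Sset M k); split; [split|rewrite -Enk].
  + move=> _ s [_ Hrs] a; rewrite (reach_det Hdet HG Hrs Hr); exact: Hno.
Qed.

Definition Mo (A : Type) (acts : seq A) n (ob : option A) a t :=
  (t < n /\ onth acts t = Some a) \/ (t = n /\ ob = Some a).

Definition Mp1 (F A : finType) (D : domain F A) (Gamma : {set lit F}) (acts : seq A) n
  (ob : option A) (x : atom F A) : Prop :=
  match x with
  | Holds l t => t <= n /\ exists s, reach D Gamma (take t acts) s /\ l \in s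
  | Possible a t => t <= n /\ exists s, reach D Gamma (take t acts) s /\ executable D a s
  | Occ a t => Mo acts n ob a t
  | Nocc a t => t <= n /\ exists b, b <> a /\ Mo acts n ob b t
  | Goal => True
  end.

Section Part1.
Variables (F A : finType) (D : domain F A) (Gamma : {set lit F}) (Delta : seq (lit F)) (n : nat).
Variables (acts : seq A) (sN : {set lit F}) (ob : option A).
Hypothesis HG : state D Gamma.
Hypothesis Hdet : deterministic D.
Hypothesis Hsz : size acts = n.
Hypothesis Hr : reach D Gamma acts sN.
Hypothesis HDl : {subset Delta <= sN}.
Hypothesis Hob1 : forall b, ob = Some b -> executable D b sN.
Hypothesis Hob2 : ob = None -> forall b, ~ executable D b sN.
Local Notation M := (Mp1 D Gamma acts n ob).
Local Notation st t s := (reach D Gamma (take t acts) s).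

Lemma st_ex t : t <= n -> exists s, st t s.
Proof.
move=> Ht; have := Hr; rewrite -{1}(cat_take_drop t acts) => /reach_cat [m [H1 _]].
by exists m.
Qed.

Lemma st_state t s : st t s -> state D s.
Proof. by move=> H; apply: (reach_state HG H). Qed.

Lemma st_uniq t s1 s2 : st t s1 -> st t s2 -> s1 = s2.
Proof. by move=> H1 H2; apply: (reach_det Hdet HG H1 H2). Qed.

Lemma st_n : st n sN.
Proof. by rewrite -Hsz take_size. Qed.

Lemma onth_lt t a : onth acts t = Some a -> t < n.
Proof. by move=> H; have := onthTE acts t; rewrite H Hsz. Qed.

Lemma onth_ex t : t < n -> exists a, onth acts t = Some a.
Proof.
move=> Ht; case E: (onth acts t) => [a|]; first by exists a.
by have := onthTE acts t; rewrite E Hsz Ht.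
Qed.

Lemma st_step t a s s' : onth acts t = Some a -> st t s -> st t.+1 s' -> Phi D a s s'.
Proof.
move=> Ha Hs Hs'; have Ht := onth_lt Ha.
move: Hs'; rewrite (take_nth a); last by rewrite Hsz.
rewrite (onth_nth a _ _ _ Ha) => /reach_rcons [m [Hm HP]].
by rewrite (st_uniq Hs Hm).
Qed.

Lemma Mo_uniq a b t : Mo acts n ob a t -> Mo acts n ob b t -> a = b.
Proof.
case=> [[Ht Ha]|[Ht Ha]] [[Ht' Hb]|[Ht' Hb]].
- by move: Ha; rewrite Hb => -[].
- by subst; rewrite ltnn in Ht.
- by subst; rewrite ltnn in Ht'.
- by move: Ha; rewrite Hb => -[].
Qed.

Lemma Mo_exec a t : Mo acts n ob a t -> t <= n /\ exists s, st t s /\ executable D a s.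
Proof.
case=> [[Ht Ha]|[-> Ha]].
- split; first exact: ltnW.
  have [s Hs] := st_ex (ltnW Ht); have [s' Hs'] := st_ex Ht.
  by exists s; split=> //; case: (st_step Ha Hs Hs').
- by split=> //; exists sN; split; [exact: st_n | exact: Hob1].
Qed.

Lemma compl_incons (s : {set lit F}) l : consistent s -> l \in s -> compl l \in s -> False.
Proof. by case: l => f [] Hc H1 H2; apply: (Hc f). Qed.

Lemma complete_compl (s : {set lit F}) l : complete s -> l \in s \/ compl l \in s.
Proof. by case: l => f [] /(_ f) /= [H|H]; auto. Qed.

Lemma M_closed : closed_reduct (Pi_n D Gamma Delta n) M M.
Proof.
move=> h pos neg Hred Hb; rcases Hred h pos.
- by split=> //; exists Gamma; rewrite take0.
- have [s Hs] := st_ex r_Ht.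
  split=> //; exists s; split=> //; exists r_e.2; split; first by case: (r_e) r_He.
  move=> p Hp; case: (Hb (Holds A p r_t)); first by apply/In_hs; exists p.
  by move=> _ [s' [Hs' Hp']]; rewrite (st_uniq Hs Hs').
- have [[Ht' Ha]|[Ht' _]] := Hb _ (or_introl erefl); last by subst; rewrite ltnn in r_Ht.
  have [s Hs] := st_ex (ltnW r_Ht); have [s' Hs'] := st_ex r_Ht.
  split=> //; exists s'; split=> //.
  have [_ [_ [_ Hsub _ _]]] := st_step Ha Hs Hs'.
  apply: (subsetP Hsub); rewrite inE; apply/orP; left; rewrite inE; apply/hasP; exists r_d => //.
  rewrite !eqxx /=; apply/allP => p Hp.
  case: (Hb (Holds A p r_t)); first by right; right; apply/In_hs; exists p.
  by move=> _ [s1 [Hs1 Hp1]]; rewrite (st_uniq Hs Hs1).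
- have [s Hs] := st_ex r_Ht.
  split=> //; exists s; split=> //.
  apply: ((st_state Hs).2 r_c.1 r_c.2); first by case: (r_c) r_Hc.
  move=> p Hp; case: (Hb (Holds A p r_t)); first by apply/In_hs; exists p.
  by move=> _ [s1 [Hs1 Hp1]]; rewrite (st_uniq Hs Hs1).
- case: (Hb _ (or_introl erefl)) => _ [s [Hs Hex]].
  case: (ltngtP r_t n) => [Hlt|Hgt|Heq].
  + have [a' Ha'] := onth_ex Hlt.
    case: (eqVneq a' r_a) => [<-|Hne]; first by left.
    by exfalso; apply: r_Hn; split=> //; exists a'; split; [apply/eqP | left].
  + by rewrite ltnNge r_Ht in Hgt.
  + subst r_t; case E: ob => [b|].
    * case: (eqVneq b r_a) => [<-|Hne]; first by right.
      by exfalso; apply: r_Hn; split=> //; exists b; split; [apply/eqP | right].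
    * by move: (Hob2 E (b := r_a)); rewrite (st_uniq st_n Hs) => /(_ Hex).
- have Hb' := Hb _ (or_introl erefl).
  by split=> //; exists r_b; split=> //; apply/eqP; rewrite eq_sym.
- case: (Hb _ (or_introl erefl)) => _ [s [Hs Hl]].
  have [s' Hs'] := st_ex r_Ht.
  split=> //; exists s'; split=> //.
  have Hst' := st_state Hs'.
  case: (complete_compl r_l (interp_complete Hst'.1)) => // Hc.
  by exfalso; apply: r_Hn; split=> //; exists s'.
- done.
Qed.

Lemma none_cases (pos neg : seq (atom F A)) :
  List.In (None, pos, neg) (Pi_n D Gamma Delta n) ->
  (exists t f, t <= n /\ pos = [:: Holds A (f, true) t; Holds A (f, false) t]) \/ neg = [:: Goal].
Proof.
move/in_Pi => H.
repeat match goal with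
| H : _ \/ _ |- _ => destruct H
| H : exists _, _ |- _ => destruct H
| H : _ /\ _ |- _ => destruct H
end; try discriminate.
- left; injection H0; intros; subst; eauto.
- right; injection H; intros; subst; eauto.
Qed.

Lemma M_constr pos neg : in_reduct (Pi_n D Gamma Delta n) M (None, pos, neg) ->
  ~ (forall b, List.In b pos -> M b).
Proof.
case=> /none_cases Hin Hneg Hb.
case: Hin => [[t [f [Ht Ep]]]|En]; subst.
  case: (Hb _ (or_introl erefl)) => _ [s [Hs H1]].
  case: (Hb _ (or_intror (or_introl erefl))) => _ [s' [Hs' H2]].
  rewrite (st_uniq Hs' Hs) in H2.
  by case: (st_state Hs) => [[Hc _] _]; apply: (Hc f).
by apply: (Hneg Goal) => //=; left.
Qed.

Section Min.
Variable T : atom F A -> Prop.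
Hypothesis HT : closed_reduct (Pi_n D Gamma Delta n) M T.

Lemma possT t a s : t <= n -> st t s -> executable D a s ->
  (forall l, l \in s -> T (Holds A l t)) -> T (Possible F a t).
Proof.
move=> Ht Hs [P [HP Hsub]] Hh.
by apply: (cl2 HT (e := (a, P)) Ht HP) => p /Hsub /Hh.
Qed.

Lemma occT t a : Mo acts n ob a t ->
  (forall s, st t s -> forall l, l \in s -> T (Holds A l t)) -> T (Occ F a t).
Proof.
move=> Ho Hh; have [Ht [s [Hs Hex]]] := Mo_exec Ho.
apply: (cl5 HT Ht); last by apply: (possT Ht Hs Hex); apply: Hh.
by case=> _ [b [Hba Hob]]; apply: Hba; apply: Mo_uniq Hob Ho.
Qed.

Lemma holdsT t : t <= n -> forall s, st t s -> forall l, l \in s -> T (Holds A l t).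
Proof.
elim: t => [_ s|t IH Ht s' Hs'].
  by rewrite take0 /= => -> l Hl; apply: (cl1 HT).
have Htn : t < n by [].
have [s Hs] := st_ex (ltnW Htn); have [a Ha] := onth_ex Htn.
have HP := st_step Ha Hs Hs'.
have IH' := IH (ltnW Htn).
have [Hex [Hst' [Hc Hsub Hcl Hleast]]] := HP.
pose W := [set l | (l \in s') && asb (T (Holds A l t.+1))].
suff HW : s' \subset W.
  by move=> l /(subsetP HW); rewrite inE => /andP [_ /asbP].
apply: Hleast.
- by move=> f [H1 H2]; apply: (Hc f); move: H1 H2; rewrite !inE => /andP [-> _] /andP [-> _].
- apply/subsetP => l Hl; rewrite inE (subsetP Hsub l Hl) /=; apply/asbP.
  move: Hl; rewrite inE => /orP [|].
  + rewrite inE => /hasP [d Hd /and3P [/eqP Hda /eqP Hdl /allP Hall]]; subst l.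
    apply: (cl3 HT Htn Hd); rewrite ?Hda.
    * by apply: occT; [left | exact: IH'].
    * by apply: (possT (ltnW Htn) Hs Hex); apply: IH'.
    * by move=> p /Hall; apply: IH'.
  + rewrite inE => /andP [Hls Hls'].
    apply: (cl7 HT Htn); last exact: (IH' _ Hs _ Hls).
    case=> _ [s1 [Hs1 Hc1]]; rewrite (st_uniq Hs1 Hs') in Hc1.
    exact: (compl_incons Hc Hls' Hc1).
- move=> P f HPf HPW; rewrite inE; apply/andP; split.
    by apply: (Hcl P f HPf) => p /HPW; rewrite inE => /andP [].
  apply/asbP; apply: (cl4 HT (c := (P, f)) Ht HPf) => p /HPW.
  by rewrite inE => /andP [_ /asbP].
Qed.

Lemma M_min x : M x -> T x.
Proof.
case: x => [l t|a t|a t|a t|] /=.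
- by case=> Ht [s [Hs Hl]]; apply: (holdsT Ht Hs).
- case=> Ht [s [Hs Hex]]; apply: (possT Ht Hs Hex); exact: holdsT.
- move=> Ho; apply: occT => //; case: (Mo_exec Ho) => Ht _; exact: holdsT.
- case=> Ht [b [Hba Hob]]; apply: (cl6 HT (b := b) Ht).
    by apply/eqP => E; apply: Hba; rewrite E.
  apply: occT => //; exact: holdsT.
- move=> _; apply: (cl9 HT) => p /HDl; exact: (holdsT (leqnn n) st_n).
Qed.
End Min.

Lemma M_answer : answer_set (Pi_n D Gamma Delta n) M.
Proof.
split; first exact: M_closed.
- by move=> T HT x; apply: M_min.
- exact: M_constr.
Qed.

End Part1.
Unset Implicit Arguments.
Theorem corollary1 (F A : finType) (D : domain F A) (Gamma : {set F * bool})
    (Delta : seq (F * bool)) (n : nat) :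
  problem_consistent D Gamma -> deterministic D ->
  (forall acts : seq A, size acts = n -> is_plan D Gamma Delta acts ->
     exists M : atom F A -> Prop,
       answer_set (Pi_n D Gamma Delta n) M /\
       (forall (i : nat) (a : A), onth acts i = Some a -> M (Occ F a i))) /\
  (forall M : atom F A -> Prop, answer_set (Pi_n D Gamma Delta n) M ->
     exists k : nat, k <= n /\
       exists acts : seq A,
         [/\ size acts = k,
             (forall (i : nat) (a : A), onth acts i = Some a -> M (Occ F a i)),
             (forall (i : nat) (a b : A), onth acts i = Some a -> M (Occ F b i) -> b = a),
             is_plan D Gamma Delta acts &
             (k < n -> forall s : {set F * bool}, trajectory_from D Gamma acts s ->
                forall a : A, ~ executable D a s)]).
Proof.
move=> Hpc Hdet; split; last exact: part2.
move=> acts Hsz [sN [[HG Hr] HDl]].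
have [ob Hob1 Hob2] : exists2 ob : option A, (forall b, ob = Some b -> executable D b sN) &
    (ob = None -> forall b, ~ executable D b sN).
  case: (classic (exists b, executable D b sN)) => [[b Hb]|Hn].
    by exists (Some b) => // b' [<-].
  by exists None => // _ b Hb; apply: Hn; exists b.
exists (Mp1 D Gamma acts n ob); split.
  exact: (M_answer HG Hdet Hsz Hr HDl Hob1 Hob2).
move=> i a Ha; left; split=> //; exact: (onth_lt Hsz Ha).
Qed.
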